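(* Consider the coupled opinion–network system described in the context with memory weight dynamics, and assume there is a constant $c>0$ with $\phi(r)>c$ for all $r\in[-2,2]$. Then the opinion diameter $D(t)=\max_{i,j}|x_j(t)-x_i(t)|$ satisfies, for all $t\ge0$, $D(t)\le \exp\big(-c^2(t+e^{-t}-1)\big)\,D(0)$.
   Context: There are $N$ individuals with opinions $x_i(t)\in[-1,1]$ and edge weights $w_{ij}(t)\in[0,1]$. The degree is $k_i=\sum_{j=1}^N w_{ij}$. With interaction function $\phi:[-2,2]\to[0,1]$, the system with memory weight dynamics is $\frac{dx_i}{dt}=\frac{1}{k_i}\sum_{j\neq i} w_{ij}\,\phi(x_j-x_i)(x_j-x_i)$, $\frac{dw_{ij}}{dt}=\phi(x_j-x_i)-w_{ij}$ for $i\neq j$, and $w_{ii}\equiv 1$. Standing assumptions: $\phi$ is Lipschitz continuous, even, and $\phi(0)>0$; $x_1(0)\le\dots\le x_N(0)$; $w_{ii}=1$; the initial network $w(0)$ is strongly connected. *)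

(* Defs.v *)
(* real numbers R, Coquelicot derivatives. Indices are nat i < N
   (individual i+1 of the paper is index i here). *)
From Stdlib Require Import Reals Lra.
From Coquelicot Require Import Coquelicot.
Open Scope R_scope.

Fixpoint sumN (n : nat) (f : nat -> R) : R :=
  match n with O => 0 | S m => sumN m f + f m end.

(* max_{k<n} f k, with value 0 for n = 0 (only used for nonnegative f, n >= 1) *)
Fixpoint maxN (n : nat) (f : nat -> R) : R :=
  match n with O => 0 | S m => Rmax (maxN m f) (f m) end.

Definition diam (N : nat) (x : nat -> R -> R) (t : R) : R :=
  maxN N (fun i => maxN N (fun j => Rabs (x j t - x i t))).

Definition degree (N : nat) (w : nat -> nat -> R -> R) (i : nat) (t : R) : R :=
  sumN N (fun j => w i j t).

Definition opinion_rhs (N : nat) (phi : R -> R) (x : nat -> R -> R)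
    (w : nat -> nat -> R -> R) (i : nat) (t : R) : R :=
  / degree N w i t *
  sumN N (fun j => if Nat.eq_dec j i then 0
                   else w i j t * phi (x j t - x i t) * (x j t - x i t)).

Inductive reach (N : nat) (w0 : nat -> nat -> R) : nat -> nat -> Prop :=
  | reach_refl : forall i, reach N w0 i i
  | reach_step : forall i j k, (j < N)%nat -> 0 < w0 i j -> reach N w0 j k ->
                 reach N w0 i k.

Definition strongly_connected (N : nat) (w0 : nat -> nat -> R) : Prop :=
  forall i j, (i < N)%nat -> (j < N)%nat -> reach N w0 i j.

(* Main.v *)
Require Import Defs.
From Stdlib Require Import Reals Lra Lia Classical.
From Coquelicot Require Import Coquelicot.
Open Scope R_scope.

Lemma barrier (Q : R -> Prop) :
  Q 0 ->
  (forall t, 0 <= t -> Q t -> exists d, 0 < d /\ forall s, t <= s < t + d -> Q s) ->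
  (forall t, 0 < t -> (forall s, 0 <= s < t -> Q s) -> Q t) ->
  forall T, 0 <= T -> Q T.
Proof.
  intros H0 Hop Hcl T HT.
  destruct (classic (Q T)) as [|nQ]; auto. exfalso.
  set (E := fun t => 0 <= t <= T /\ forall s, 0 <= s <= t -> Q s).
  assert (Hb : bound E) by (exists T; intros t [Ht _]; lra).
  assert (He : exists y, E y) by (exists 0; split; [lra| intros s Hs; replace s with 0 by lra; auto]).
  destruct (completeness E Hb He) as [m [Hub Hlub]].
  assert (Hm0 : 0 <= m) by (apply Hub; destruct He as [y _]; split; [lra| intros s Hs; replace s with 0 by lra; auto]).
  assert (HmT : m <= T) by (apply Hlub; intros t [Ht _]; lra).
  assert (Hbel : forall s, 0 <= s < m -> Q s).
  { intros s Hs. destruct (classic (Q s)) as [|nQs]; auto. exfalso.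
    assert (m <= s); [|lra]. apply Hlub. intros t [Ht HQ].
    destruct (Rle_dec t s); auto. exfalso. apply nQs, HQ. lra. }
  assert (HQm : Q m).
  { destruct (Req_dec m 0) as [->|]; auto. apply Hcl; auto; lra. }
  destruct (Hop m Hm0 HQm) as [d [Hd Hs]].
  assert (m < T) by (destruct (Req_dec m T) as [<-|]; [contradiction| lra]).
  assert (E (Rmin (m + d/2) T)).
  { split. split; [apply Rmin_glb; lra| apply Rmin_r].
    intros s Hs'. assert (s <= m + d/2) by (pose proof (Rmin_l (m+d/2) T); lra).
    destruct (Rlt_dec s m). apply Hbel; lra. apply Hs; lra. }
  apply Hub in H1. unfold Rmin in H1. destruct (Rle_dec (m + d/2) T); lra.
Qed.

Lemma filter_forall_lt (F : (R -> Prop) -> Prop) {FF : Filter F} (P : nat -> R -> Prop) n :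
  (forall k, (k < n)%nat -> F (P k)) -> F (fun s => forall k, (k < n)%nat -> P k s).
Proof.
  induction n; intros H.
  - apply filter_forall. intros; lia.
  - eapply filter_imp; [| apply filter_and; [apply IHn; intros; apply H; lia| apply (H n); lia]].
    intros s [H1 H2] k Hk. destruct (Nat.eq_dec k n) as [->|]; auto. apply H1; lia.
Qed.

Lemma ev_neg (F : (R -> Prop) -> Prop) {FF : Filter F} (f1 f2 f3 : R -> R) a1 a2 a3 :
  filterlim f1 F (locally a1) -> filterlim f2 F (locally a2) -> filterlim f3 F (locally a3) ->
  a1 - a2 - a3 < 0 -> F (fun s => f1 s - f2 s - f3 s < 0).
Proof.
  intros H1 H2 H3 Ha.
  assert (He : 0 < -(a1 - a2 - a3)/3) by lra.
  set (eps := mkposreal _ He).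
  apply filterlim_locally with (eps := eps) in H1.
  apply filterlim_locally with (eps := eps) in H2.
  apply filterlim_locally with (eps := eps) in H3.
  eapply filter_imp; [| apply filter_and; [exact H1| apply filter_and; [exact H2| exact H3]]].
  intros s [B1 [B2 B3]]. change (Rabs (f1 s - a1) < eps) in B1.
  change (Rabs (f2 s - a2) < eps) in B2. change (Rabs (f3 s - a3) < eps) in B3.
  simpl in *. apply Rabs_def2 in B1. apply Rabs_def2 in B2. apply Rabs_def2 in B3. lra.
Qed.

Lemma left_der (h : R -> R) t l : 0 < t -> is_derive h t l ->
  (forall s, 0 <= s < t -> h s < 0) -> h t <= 0 /\ (h t = 0 -> 0 <= l).
Proof.
  intros Ht Hd Hneg. apply is_derive_Reals in Hd.
  split.
  - destruct (Rle_dec (h t) 0) as [|Hp]; auto. exfalso.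
    assert (Hc := derivable_continuous_pt h t (exist _ l Hd)).
    destruct (Hc (h t)) as [al [Hal Hc']]. lra.
    set (s := t - Rmin al t / 2).
    assert (0 < Rmin al t) by (apply Rmin_glb_lt; lra).
    assert (Rmin al t <= al) by apply Rmin_l. assert (Rmin al t <= t) by apply Rmin_r.
    specialize (Hc' s). unfold R_dist in Hc'. simpl in Hc'. unfold R_dist in Hc'.
    assert (Rabs (h s - h t) < h t).
    { apply Hc'. split. split; [exact I| unfold s; lra]. unfold s. rewrite Rabs_left; lra. }
    assert (h s < 0) by (apply Hneg; unfold s; lra).
    apply Rabs_def2 in H2. lra.
  - intros H0. destruct (Rle_dec 0 l) as [|Hl]; auto. exfalso.
    assert (He : 0 < - l / 2) by lra.
    destruct (Hd _ He) as [[del Hdel] Hd']. simpl in Hd'.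
    set (hh := - (Rmin del t / 2)).
    assert (0 < Rmin del t) by (apply Rmin_glb_lt; lra).
    assert (Rmin del t <= del) by apply Rmin_l. assert (Rmin del t <= t) by apply Rmin_r.
    assert (Hq := Hd' hh ltac:(unfold hh; lra) ltac:(unfold hh; rewrite Rabs_left; lra)).
    rewrite H0 in Hq. apply Rabs_def2 in Hq.
    assert (h (t + hh) < 0) by (apply Hneg; unfold hh; lra).
    set (q := (h (t + hh) - 0) / hh) in Hq.
    assert (h (t + hh) = q * hh) by (unfold q; field; unfold hh; lra).
    assert (hh < 0) by (unfold hh; lra).
    nra.
Qed.

Lemma sumN_le n f g : (forall k, (k < n)%nat -> f k <= g k) -> sumN n f <= sumN n g.
Proof. induction n; simpl; intros H; [lra|]. pose proof (H n ltac:(lia)).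
  assert (sumN n f <= sumN n g) by (apply IHn; intros; apply H; lia). lra. Qed.

Lemma sumN_lin n (x : nat -> R) a C :
  sumN n (fun k => C * (x k - a)) = C * (sumN n x - INR n * a).
Proof. induction n; simpl; [ring|]. rewrite IHn. destruct n; simpl; ring. Qed.

Lemma sumN_const n C : sumN n (fun _ => C) = INR n * C.
Proof. induction n; simpl; [ring|]. rewrite IHn. destruct n; simpl; ring. Qed.

Lemma sumN_ge_one n f i : (forall k, (k < n)%nat -> 0 <= f k) -> (i < n)%nat ->
  f i <= sumN n f.
Proof. induction n; intros H Hi; [lia|]. simpl.
  assert (0 <= sumN n f) by (clear IHn Hi; induction n; simpl; [lra|];
     pose proof (H n ltac:(lia)); assert (0 <= sumN n f) by (apply IHn; intros; apply H; lia); lra).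
  destruct (Nat.eq_dec i n) as [->|].
  - lra.
  - assert (f i <= sumN n f) by (apply IHn; [intros; apply H; lia| lia]).
    pose proof (H n ltac:(lia)). lra. Qed.

Lemma maxN_ge n f k : (k < n)%nat -> f k <= Defs.maxN n f.
Proof. induction n; intros Hk; [lia|]. simpl.
  destruct (Nat.eq_dec k n) as [->|]. apply Rmax_r.
  eapply Rle_trans; [apply IHn; lia| apply Rmax_l]. Qed.

Lemma maxN_le n f b : 0 <= b -> (forall k, (k < n)%nat -> f k <= b) -> Defs.maxN n f <= b.
Proof. induction n; intros Hb H; simpl; [lra|]. apply Rmax_lub.
  apply IHn; auto. apply H; lia. Qed.

Lemma degree_bounds N w i t : (i < N)%nat -> (forall k, (k < N)%nat -> 0 <= w i k t <= 1) ->
  w i i t = 1 -> 1 <= degree N w i t <= INR N.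
Proof. intros Hi Hw Hd. unfold degree. split.
  rewrite <- Hd. apply (sumN_ge_one N (fun j => w i j t)); auto. intros k Hk; apply Hw; auto.
  rewrite <- (Rmult_1_r (INR N)), <- sumN_const. apply sumN_le. intros k Hk; apply Hw; auto. Qed.

Lemma rhs_upper N phi x w i t c a : (i < N)%nat -> 0 <= a -> 0 < c ->
  (forall k, (k < N)%nat -> k <> i -> c < phi (x k t - x i t)) ->
  (forall k, (k < N)%nat -> x k t <= x i t) ->
  (forall k, (k < N)%nat -> k <> i -> c * a <= w i k t) ->
  (forall k, (k < N)%nat -> 0 <= w i k t <= 1) -> w i i t = 1 ->
  opinion_rhs N phi x w i t <= c^2 * a * (sumN N (fun k => x k t) / INR N - x i t).
Proof.
  intros Hi Ha Hc Hphi Hmax Hwl Hw Hd.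
  destruct (degree_bounds N w i t Hi Hw Hd) as [Dl Du].
  set (B := c^2 * a * (sumN N (fun k => x k t) - INR N * x i t)).
  assert (HS : sumN N (fun j => if Nat.eq_dec j i then 0
                   else w i j t * phi (x j t - x i t) * (x j t - x i t)) <= B).
  { unfold B. rewrite <- sumN_lin. apply sumN_le. intros k Hk.
    destruct (Nat.eq_dec k i) as [->|Hne]. nra.
    pose proof (Hphi k Hk Hne). pose proof (Hmax k Hk). pose proof (Hwl k Hk Hne).
    assert (0 <= c*a) by (apply Rmult_le_pos; lra).
    assert (c * a * c <= w i k t * phi (x k t - x i t)).
    { apply Rle_trans with (c*a*phi (x k t - x i t)). apply Rmult_le_compat_l; lra. apply Rmult_le_compat_r; lra. }
    simpl. nra. }
  assert (HB : B <= 0).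
  { unfold B. assert (sumN N (fun k => x k t) <= INR N * x i t).
    rewrite <- sumN_const. apply sumN_le; auto. assert (0 <= c^2*a) by (apply Rmult_le_pos; [apply pow2_ge_0|auto]). nra. }
  unfold opinion_rhs. fold (degree N w i t).
  assert (HN : 0 < INR N) by lra.
  replace (c ^ 2 * a * (sumN N (fun k => x k t) / INR N - x i t)) with (/ INR N * B)
    by (unfold B; field; lra).
  apply Rle_trans with (/ degree N w i t * B).
  apply Rmult_le_compat_l; auto. left; apply Rinv_0_lt_compat; lra.
  assert (/ INR N <= / degree N w i t) by (apply Rinv_le_contravar; lra). nra.
Qed.

Lemma rhs_lower N phi x w i t c a : (i < N)%nat -> 0 <= a -> 0 < c ->
  (forall k, (k < N)%nat -> k <> i -> c < phi (x k t - x i t)) ->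
  (forall k, (k < N)%nat -> x i t <= x k t) ->
  (forall k, (k < N)%nat -> k <> i -> c * a <= w i k t) ->
  (forall k, (k < N)%nat -> 0 <= w i k t <= 1) -> w i i t = 1 ->
  c^2 * a * (sumN N (fun k => x k t) / INR N - x i t) <= opinion_rhs N phi x w i t.
Proof.
  intros Hi Ha Hc Hphi Hmin Hwl Hw Hd.
  destruct (degree_bounds N w i t Hi Hw Hd) as [Dl Du].
  set (B := c^2 * a * (sumN N (fun k => x k t) - INR N * x i t)).
  assert (HS : B <= sumN N (fun j => if Nat.eq_dec j i then 0
                   else w i j t * phi (x j t - x i t) * (x j t - x i t))).
  { unfold B. rewrite <- sumN_lin. apply sumN_le. intros k Hk.
    destruct (Nat.eq_dec k i) as [->|Hne]. nra.
    pose proof (Hphi k Hk Hne). pose proof (Hmin k Hk). pose proof (Hwl k Hk Hne).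
    assert (0 <= c*a) by (apply Rmult_le_pos; lra).
    assert (c * a * c <= w i k t * phi (x k t - x i t)).
    { apply Rle_trans with (c*a*phi (x k t - x i t)). apply Rmult_le_compat_l; lra. apply Rmult_le_compat_r; lra. }
    simpl. nra. }
  assert (HB : 0 <= B).
  { unfold B. assert (INR N * x i t <= sumN N (fun k => x k t)).
    rewrite <- sumN_const. apply sumN_le; auto. assert (0 <= c^2*a) by (apply Rmult_le_pos; [apply pow2_ge_0|auto]). nra. }
  unfold opinion_rhs. fold (degree N w i t).
  assert (HN : 0 < INR N) by lra.
  replace (c ^ 2 * a * (sumN N (fun k => x k t) / INR N - x i t)) with (/ INR N * B)
    by (unfold B; field; lra).
  apply Rle_trans with (/ degree N w i t * B).
  assert (/ INR N <= / degree N w i t) by (apply Rinv_le_contravar; lra). nra.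
  apply Rmult_le_compat_l; auto. left; apply Rinv_0_lt_compat; lra.
Qed.

Lemma w_lower (wf p : R -> R) c : 0 < c -> (forall s, 0 <= s -> 0 <= wf s) ->
  (forall s, 0 < s -> is_derive wf s (p s - wf s)) -> (forall s, 0 < s -> c < p s) ->
  forall t, 0 < t -> c * (1 - exp (-t)) <= wf t.
Proof.
  intros Hc Hw0 Hd Hp t Ht.
  set (u := fun s => (wf s - c) * exp s).
  assert (Hu : forall s, 0 < s -> derivable_pt_lim u s ((p s - c) * exp s)).
  { intros s Hs. apply is_derive_Reals. unfold u.
    assert (H : is_derive (fun s => (wf s - c) * exp s) s
                 ((p s - wf s - 0) * exp s + (wf s - c) * exp s)).
    { exact (is_derive_mult (fun s => wf s - c) exp s _ _
         (is_derive_minus wf (fun _ => c) s _ _ (Hd s Hs) (is_derive_const c s))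
         (is_derive_exp s) (fun a b => Rmult_comm a b)). }
    replace ((p s - c) * exp s) with ((p s - wf s - 0) * exp s + (wf s - c) * exp s) by ring.
    exact H. }
  assert (Hinc : forall s, 0 < s < t -> u s < u t).
  { intros s Hs. destruct (MVT_cor2 u (fun s => (p s - c) * exp s) s t ltac:(lra)) as [xi [Hxi Hxr]].
    intros; apply Hu; lra.
    assert (0 < (p xi - c) * exp xi) by (apply Rmult_lt_0_compat; [pose proof (Hp xi ltac:(lra)); lra| apply exp_pos]).
    nra. }
  assert (Hut : - c <= u t).
  { destruct (Rle_dec (-c) (u t)) as [|Hn]; auto. exfalso.
    set (r := - u t / c).
    assert (Hr : 1 < r) by (unfold r; apply Rlt_div_r; lra).
    assert (Hln : 0 < ln r) by (rewrite <- ln_1; apply ln_increasing; lra).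
    set (s := Rmin (t/2) (ln r / 2)).
    assert (0 < s) by (apply Rmin_glb_lt; lra).
    assert (s <= t/2) by apply Rmin_l. assert (s <= ln r / 2) by apply Rmin_r.
    assert (exp s < r) by (rewrite <- (exp_ln r) by lra; apply exp_increasing; lra).
    pose proof (Hinc s ltac:(lra)).
    assert (u s >= - c * exp s) by (unfold u; pose proof (Hw0 s ltac:(lra)); pose proof (exp_pos s); nra).
    assert (u t = - (r * c)) by (unfold r; field; lra).
    nra. }
  unfold u in Hut. rewrite exp_Ropp.
  pose proof (exp_pos t).
  assert (c - c * / exp t <= wf t); [|lra].
  assert (Hw : wf t - c >= - c * / exp t).
  { apply Rle_ge. apply (Rmult_le_reg_r (exp t)); auto. field_simplify; lra. }
  lra.
Qed.

Definition gfun (K e c s : R) : R := K * exp (-(c^2) * (s + exp (-s) - 1)) + e * s.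

Lemma g_deriv K e c s : is_derive (gfun K e c) s
  (K * (exp (-(c^2) * (s + exp (-s) - 1)) * (-(c^2) * (1 - exp (-s)))) + e).
Proof. unfold gfun. auto_derive; auto. replace (- (c * (c * 1)) * (s + exp (- s) + - (1))) with (-(c^2)*(s+exp(-s)-1)) by ring. ring. Qed.

Lemma g_cont K e c s : continuous (gfun K e c) s.
Proof. apply (ex_derive_continuous (K:=R_AbsRing) (V:=R_NormedModule) (gfun K e c)). eexists. apply g_deriv. Qed.

Theorem proposition2
  (N : nat) (phi : R -> R) (c : R)
  (x : nat -> R -> R) (w : nat -> nat -> R -> R)
  (HN : (1 <= N)%nat)
  (Hphi_range : forall r, -2 <= r <= 2 -> 0 <= phi r <= 1)
  (Hphi_lip : exists L, forall r s, -2 <= r <= 2 -> -2 <= s <= 2 ->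
                Rabs (phi r - phi s) <= L * Rabs (r - s))
  (Hphi_even : forall r, -2 <= r <= 2 -> phi (- r) = phi r)
  (Hphi0 : 0 < phi 0)
  (Hc : 0 < c)
  (Hphic : forall r, -2 <= r <= 2 -> c < phi r)
  (Hx_range : forall i t, (i < N)%nat -> 0 <= t -> -1 <= x i t <= 1)
  (Hw_range : forall i j t, (i < N)%nat -> (j < N)%nat -> 0 <= t ->
                0 <= w i j t <= 1)
  (Hw_diag : forall i t, (i < N)%nat -> 0 <= t -> w i i t = 1)
  (Hx_sorted : forall i j, (i <= j)%nat -> (j < N)%nat -> x i 0 <= x j 0)
  (Hsc : strongly_connected N (fun i j => w i j 0))
  (Hx_ode : forall i t, (i < N)%nat -> 0 < t ->
              is_derive (x i) t (opinion_rhs N phi x w i t))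
  (Hw_ode : forall i j t, (i < N)%nat -> (j < N)%nat -> i <> j -> 0 < t ->
              is_derive (w i j) t (phi (x j t - x i t) - w i j t))
  (Hx_cont0 : forall i, (i < N)%nat ->
              filterlim (x i) (at_right 0) (locally (x i 0)))
  (Hw_cont0 : forall i j, (i < N)%nat -> (j < N)%nat ->
              filterlim (w i j) (at_right 0) (locally (w i j 0))) :
  forall t, 0 <= t ->
    diam N x t <= exp (- (c ^ 2) * (t + exp (- t) - 1)) * diam N x 0.
Proof.
  set (D0 := diam N x 0).
  assert (Hpair : forall s i j, (i < N)%nat -> (j < N)%nat -> Rabs (x j s - x i s) <= diam N x s).
  { intros s i j Hi Hj. unfold diam.
    eapply Rle_trans; [| apply (maxN_ge N (fun i => Defs.maxN N (fun j => Rabs (x j s - x i s))) i Hi)].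
    apply (maxN_ge N (fun j => Rabs (x j s - x i s)) j Hj). }
  assert (HD0 : 0 <= D0).
  { eapply Rle_trans; [apply Rabs_pos| apply (Hpair 0 0%nat 0%nat); lia]. }
  assert (Hphi' : forall s k l, (k < N)%nat -> (l < N)%nat -> 0 <= s -> c < phi (x l s - x k s)).
  { intros s k l Hk Hl Hs. apply Hphic. pose proof (Hx_range k s Hk Hs). pose proof (Hx_range l s Hl Hs). lra. }
  assert (Hwl : forall s k l, (k < N)%nat -> (l < N)%nat -> k <> l -> 0 < s -> c * (1 - exp (-s)) <= w k l s).
  { intros s k l Hk Hl Hkl Hs. apply (w_lower (w k l) (fun s => phi (x l s - x k s))).
    - exact Hc.
    - intros s0 Hs0; apply (Hw_range k l s0); auto.
    - intros s0 Hs0; apply Hw_ode; auto.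
    - intros s0 Hs0; apply Hphi'; auto; lra.
    - exact Hs. }
  assert (Hxlim : forall k s, (k < N)%nat -> 0 <= s -> filterlim (x k) (at_right s) (locally (x k s))).
  { intros k s Hk Hs. destruct (Req_dec s 0) as [->|Hs0]. apply Hx_cont0; auto.
    apply (filterlim_filter_le_1 (G := at_right s) (F := locally s)). apply filter_le_within.
    apply (ex_derive_continuous (K:=R_AbsRing) (V:=R_NormedModule) (x k)). eexists. apply Hx_ode; auto; lra. }
  assert (Key : forall e, 0 < e -> forall T, 0 <= T -> forall i j, (i < N)%nat -> (j < N)%nat ->
             x j T - x i T - gfun (D0 + e) e c T < 0).
  { intros e He.
    apply (barrier (fun T => forall i j, (i < N)%nat -> (j < N)%nat -> x j T - x i T - gfun (D0 + e) e c T < 0)).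
    - intros i j Hi Hj. unfold gfun. rewrite Ropp_0, exp_0.
      replace (-(c^2)*(0+1-1)) with 0 by ring. rewrite exp_0.
      pose proof (Hpair 0 i j Hi Hj). pose proof (Rle_abs (x j 0 - x i 0)). fold D0 in H. lra.
    - intros t Ht HQ.
      assert (Hev : at_right t (fun s => forall i, (i < N)%nat -> (fun i s => forall j, (j < N)%nat ->
                 x j s - x i s - gfun (D0 + e) e c s < 0) i s)).
      { apply (filter_forall_lt _ (fun i s => forall j, (j < N)%nat -> x j s - x i s - gfun (D0 + e) e c s < 0) N).
        intros i Hi.
        apply (filter_forall_lt _ (fun j s => x j s - x i s - gfun (D0 + e) e c s < 0) N).
        intros j Hj.
        apply (ev_neg _ (x j) (x i) (gfun (D0+e) e c) (x j t) (x i t) (gfun (D0+e) e c t)); auto.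
        apply (filterlim_filter_le_1 (G := at_right t) (F := locally t)). apply filter_le_within.
        apply g_cont. }
      destruct Hev as [eps Heps]. exists eps. split. apply cond_pos.
      intros s Hs i j Hi Hj. destruct (Req_dec s t) as [->|Hst]. apply HQ; auto.
      apply (Heps s); auto. change (Rabs (s - t) < eps). rewrite Rabs_right; lra. lra.
    - intros t Ht HQ.
      assert (Hder : forall k l, (k < N)%nat -> (l < N)%nat ->
        is_derive (fun s => x l s - x k s - gfun (D0 + e) e c s) t
          (opinion_rhs N phi x w l t - opinion_rhs N phi x w k t -
           ((D0 + e) * (exp (-(c^2) * (t + exp (-t) - 1)) * (-(c^2) * (1 - exp (-t)))) + e))).
      { intros k l Hk Hl. apply (is_derive_minus (fun s => x l s - x k s)).
        apply (is_derive_minus (x l) (x k)); apply Hx_ode; auto. apply g_deriv. }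
      assert (Hle : forall k l, (k < N)%nat -> (l < N)%nat -> x l t - x k t - gfun (D0 + e) e c t <= 0).
      { intros k l Hk Hl. apply (proj1 (left_der _ t _ Ht (Hder k l Hk Hl) ltac:(intros s Hs; apply HQ; auto))). }
      intros i j Hi Hj. destruct (Rlt_dec (x j t - x i t - gfun (D0 + e) e c t) 0) as [|Hn]; auto.
      exfalso.
      assert (H0 : x j t - x i t - gfun (D0 + e) e c t = 0) by (pose proof (Hle i j Hi Hj); lra).
      pose proof (proj2 (left_der _ t _ Ht (Hder i j Hi Hj) ltac:(intros s Hs; apply HQ; auto)) H0) as Hl0.
      set (a := 1 - exp (-t)) in *.
      assert (Ha : 0 <= a).
      { unfold a. assert (exp (-t) < exp 0) by (apply exp_increasing; lra). rewrite exp_0 in H. lra. }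
      assert (Hj' := rhs_upper N phi x w j t c a Hj Ha Hc
        ltac:(intros k Hk _; apply Hphi'; auto; lra)
        ltac:(intros k Hk; pose proof (Hle i k Hi Hk); lra)
        ltac:(intros k Hk Hkj; apply Hwl; auto)
        ltac:(intros k Hk; apply Hw_range; auto; lra)
        ltac:(apply Hw_diag; auto; lra)).
      assert (Hi' := rhs_lower N phi x w i t c a Hi Ha Hc
        ltac:(intros k Hk _; apply Hphi'; auto; lra)
        ltac:(intros k Hk; pose proof (Hle k j Hk Hj); lra)
        ltac:(intros k Hk Hkj; apply Hwl; auto)
        ltac:(intros k Hk; apply Hw_range; auto; lra)
        ltac:(apply Hw_diag; auto; lra)).
      set (S := sumN N (fun k => x k t)) in *.
      assert (Hxj : x j t = x i t + gfun (D0 + e) e c t) by lra.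
      assert (Heq : c^2*a*(S / INR N - x j t) - c^2*a*(S / INR N - x i t)
         - ((D0 + e) * (exp (-(c^2) * (t + exp (-t) - 1)) * (-(c^2) * a)) + e)
         = -(c^2*a*e*t) - e) by (rewrite Hxj; unfold gfun; ring).
      assert (0 <= c^2*a*e*t).
      { apply Rmult_le_pos; [|lra]. apply Rmult_le_pos; [|lra]. apply Rmult_le_pos; [apply pow2_ge_0|lra]. }
      lra. }
  intros t Ht. set (E := exp (-(c^2) * (t + exp (-t) - 1))).
  assert (HE : 0 < E) by apply exp_pos.
  assert (Hb : forall e, 0 < e -> diam N x t <= (D0 + e) * E + e * t).
  { intros e He. assert (0 <= (D0 + e) * E + e * t) by nra.
    unfold diam. apply maxN_le; auto. intros k Hk. apply maxN_le; auto. intros l Hl.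
    apply Rabs_le. pose proof (Key e He t Ht k l Hk Hl). pose proof (Key e He t Ht l k Hl Hk).
    unfold gfun in *. fold E in H0, H1. lra. }
  destruct (Rle_dec (diam N x t) (E * D0)) as [|Hn]; auto. exfalso.
  set (d := diam N x t - E * D0).
  assert (Hd : 0 < d) by (unfold d; lra).
  set (e := d / (2 * (E + t + 1))).
  assert (He : 0 < e) by (unfold e; apply Rdiv_lt_0_compat; lra).
  assert (He2 : e * (E + t + 1) = d / 2) by (unfold e; field; lra).
  pose proof (Hb e He). assert (e * (E + t) < d / 2) by nra.
  unfold d in *. nra.
Qed.
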